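(* Let $Y:=C_0(\mathbb{R}^d)$ and $E_Y \subseteq Y$. Assume that for all $\Delta \in (0,1]$, all $(s,T) \in \Delta_J$, all $\epsilon \in (0,1]$ and all $f \in E_Y$ there exists $A_\epsilon \subseteq \Omega$ with $\mathbb{P}(A_\epsilon) \geq 1-\Delta$ such that the family $\{V_\epsilon(s,t)(\omega)f: t \in[s,T], \epsilon \in (0,1], \omega \in A_\epsilon \}$ converges uniformly to $0$ at infinity, is equicontinuous and is uniformly bounded. Then $\{V_\epsilon\}$ satisfies the compact containment criterion in $E_Y$: for every $f\in E_Y$, $s\in J$, $\Delta\in(0,1]$ and $T\in J(s)$ there exists a compact $K\subseteq Y$ with $\liminf_{\epsilon\to0}\mathbb P[V_\epsilon(s,t)f\in K\ \forall t\in[s,T]]\ge1-\Delta$.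
   Context: $C_0(\mathbb R^d)$ is the Banach space of continuous functions $\mathbb R^d\to\mathbb R$ vanishing at infinity, with sup norm. A family $\{f_\alpha\}$ converges uniformly to $0$ at infinity if for all $\eta>0$ there is $\delta>0$ with $\sup_\alpha|f_\alpha(z)|<\eta$ whenever $|z|>\delta$. $J$ is $\mathbb{R}^+$ or $[0,T_\infty]$, $\Delta_J=\{(s,t)\in J^2:s\le t\}$, $J(s)=\{t\in J:t\ge s\}$. An inhomogeneous $Y$-semigroup is a map $\Gamma:\Delta_J\to\mathcal B(Y)$ with $\Gamma(t,t)=I$, $\Gamma(s,r)\Gamma(r,t)=\Gamma(s,t)$. Probabilistic setting: $(\Omega,\mathcal F,\mathbb P)$ complete; $X$ finite; $(x_n,T_n)_{n\ge0}$ a Markov renewal process ($x_n\in X$, $T_0=0<T_1<\dots$) with semi-Markov kernel $Q$; $N(t)=\sup\{n:T_n\le t\}$ (finite on $\Omega$ after restriction to a full-measure event); $x(t)=x_{N(t)}$; $N_s(t)=N(t)-N(s)$, $T_0(s)=s$, $T_n(s)=T_{N(s)+n}$ ($n\ge1$), $x_n(s)=x(T_n(s))$. $(\Gamma_x)_{x\in X}$ are inhomogeneous $Y$-semigroups and $(D^\epsilon(x,y))_{x,y\in X,\epsilon\in(0,1]}\subseteq\mathcal B(Y)$ (measurable in their arguments). With $t^{\epsilon,s}=s+\epsilon(t-s)$, $T^{\epsilon,s}_k(s)=s+\epsilon(T_k(s)-s)$, $V_\epsilon(s,t)=\big[\prod_{k=1}^{N_s(t^{1/\epsilon,s})}\Gamma_{x_{k-1}(s)}(T^{\epsilon,s}_{k-1}(s),T^{\epsilon,s}_k(s))D^\epsilon(x_{k-1}(s),x_k(s))\big]\Gamma_{x(t^{1/\epsilon,s})}(T^{\epsilon,s}_{N_s(t^{1/\epsilon,s})}(s),t)$,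 product ordered left to right, empty product $I$. *)

(* Defs.v *)
From HB Require Import structures.
From mathcomp Require Import all_boot all_order all_algebra.
From mathcomp Require Import all_classical all_reals all_analysis.
Set Implicit Arguments. Unset Strict Implicit. Unset Printing Implicit Defensive.
Import Order.TTheory GRing.Theory Num.Theory.
Import numFieldNormedType.Exports.
Local Open Scope classical_set_scope.
Local Open Scope ring_scope.

Section Defs.
Variables (R : realType) (d : nat).

(* functions R^d -> R ; R^d is 'rV[R]_d with its (max) norm *)
Definition Fn := 'rV[R]_d -> R.
Definition Op := Fn -> Fn.

Definition vanish_at_infinity (f : Fn) : Prop :=
  forall eta : R, 0 < eta -> exists delta : R,
    forall z : 'rV[R]_d, delta < `|z| -> `|f z| < eta.

Definition C0 : set Fn := [set f | continuous f /\ vanish_at_infinity f].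

Definition bounded_op (A : Op) : Prop :=
  (forall f, C0 f -> C0 (A f)) /\
  (forall (a : R) f g, C0 f -> C0 g -> A (a *: f + g) = a *: A f + A g) /\
  (exists M : R, forall f (c : R), C0 f -> (forall z, `|f z| <= c) ->
     forall z, `|A f z| <= M * c).

Definition unif_vanish (F : set Fn) : Prop :=
  forall eta : R, 0 < eta -> exists delta : R,
    forall g, F g -> forall z : 'rV[R]_d, delta < `|z| -> `|g z| < eta.

Definition equicontinuous_fam (F : set Fn) : Prop :=
  forall (z : 'rV[R]_d) (e : R), 0 < e -> exists2 del : R, 0 < del &
    forall g, F g -> forall w : 'rV[R]_d, `|z - w| < del -> `|g z - g w| < e.

Definition unif_bounded (F : set Fn) : Prop :=
  exists M : R, forall g, F g -> forall z, `|g z| <= M.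

Definition time_set (J : set R) : Prop :=
  J = `[0, +oo[%classic \/ exists Tinf : R, 0 <= Tinf /\ J = `[0, Tinf]%classic.

Definition inhom_semigroup (J : set R) (G : R -> R -> Op) : Prop :=
  (forall s t, J s -> J t -> s <= t -> bounded_op (G s t)) /\
  (forall t f, J t -> C0 f -> G t t f = f) /\
  (forall s r t f, J s -> J r -> J t -> s <= r -> r <= t -> C0 f ->
     G s r (G r t f) = G s t f).

End Defs.

Section Prob.
Local Open Scope ereal_scope.
Context (dm : measure_display) (Omega : measurableType dm) (R : realType).

Definition complete_prob (P : probability Omega R) : Prop :=
  forall N : set Omega, measurable N -> P N = 0 ->
    forall A : set Omega, A `<=` N -> measurable A.

(* inner probability of an arbitrary (possibly non-measurable) set *)
Definition inner_prob (P : probability Omega R) (A : set Omega) : \bar R :=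
  ereal_sup [set v | exists B : set Omega, measurable B /\ B `<=` A /\ v = P B].

(* Markov renewal process (x_n, T_n) with semi-Markov kernel Q, described by
   its finite-dimensional distributions; T_0 = 0 < T_1 < ..., and N(t) finite *)
Definition markov_renewal (X : finType) (P : probability Omega R)
  (x : nat -> Omega -> X) (T : nat -> Omega -> R) (Q : X -> X -> R -> R) : Prop :=
  (forall n y, measurable [set w | x n w = y]) /\
  (forall n, measurable_fun setT (T n)) /\
  (forall w, T 0%N w = 0%R) /\
  (forall (n : nat) w, (T n w < T n.+1 w)%R) /\
  (forall w (t : R), exists n, (t < T n w)%R) /\
  (forall (n : nat) (y : nat -> X) (u : nat -> R),
     P [set w | (forall k, (k <= n)%N -> x k w = y k) /\
                (forall k, (1 <= k <= n)%N -> (T k w - T k.-1 w <= u k)%R)]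
     = P [set w | x 0%N w = y 0%N] *
       (\prod_(1 <= k < n.+1) Q (y k.-1) (y k) (u k))%:E).

End Prob.

Section V.
Context (dm : measure_display) (Omega : measurableType dm) (R : realType)
  (d : nat) (X : finType).
Variables (x : nat -> Omega -> X) (T : nat -> Omega -> R)
  (Gam : X -> R -> R -> Op R d) (D : R -> X -> X -> Op R d).

(* N(t) = sup {n | T_n <= t} *)
Definition Nc (w : Omega) (t : R) : nat :=
  xget 0%N [set n | T n w <= t /\ t < T n.+1 w].
Definition xt (w : Omega) (t : R) : X := x (Nc w t) w.
Definition Ns (w : Omega) (s t : R) : nat := (Nc w t - Nc w s)%N.
Definition Tks (w : Omega) (s : R) (k : nat) : R :=
  if k is 0%N then s else T (Nc w s + k)%N w.
Definition xks (w : Omega) (s : R) (k : nat) : X := xt w (Tks w s k).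
Definition rescale (eps s t : R) : R := s + eps * (t - s).
Definition Tkes (eps : R) (w : Omega) (s : R) (k : nat) : R :=
  rescale eps s (Tks w s k).

(* V_eps(s,t)(w) ; operator products are compositions, ordered left to right *)
Definition Veps (eps s t : R) (w : Omega) : Op R d :=
  let n := Ns w s (rescale eps^-1 s t) in
  foldr (fun k acc =>
           (Gam (xks w s k.-1) (Tkes eps w s k.-1) (Tkes eps w s k))
             \o (D eps (xks w s k.-1) (xks w s k)) \o acc)
        (Gam (xt w (rescale eps^-1 s t)) (Tkes eps w s n) t)
        (iota 1 n).

End V.

(* Main.v *)
Require Import Defs.
From HB Require Import structures.
From mathcomp Require Import all_boot all_order all_algebra.
From mathcomp Require Import all_classical all_reals all_analysis.
From mathcomp Require Import ring lra.
Import Order.TTheory GRing.Theory Num.Theory.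
Import numFieldNormedType.Exports.
Local Open Scope classical_set_scope.
Local Open Scope ring_scope.

Lemma closure_approx (R : realType) d (W : set ('rV[R]_d -> R)) (p : 'rV[R]_d -> R) :
  closure (W : set {family compact, 'rV[R]_d -> R}) p ->
  forall z1 z2 (e : R), 0 < e -> exists h, W h /\ `|p z1 - h z1| < e /\ `|p z2 - h z2| < e.
Proof.
move=> cl z1 z2 e e0.
have E := entourage_ball R (PosNum e0).
have N1 := @fam_nbhs _ R compact [set z1] _ (p : {family compact, 'rV[R]_d -> R}) E (@compact_set1 _ z1).
have N2 := @fam_nbhs _ R compact [set z2] _ (p : {family compact, 'rV[R]_d -> R}) E (@compact_set1 _ z2).
have [h [Wh [H1 H2]]] := cl _ (filterI N1 N2).
exists h; split => //; split.
- by have := H1 z1 erefl; rewrite /= -ball_normE.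
- by have := H2 z2 erefl; rewrite /= -ball_normE.
Qed.

Arguments closure_approx {R d W p}.

Lemma closure_vanish (R : realType) d (W : set ('rV[R]_d -> R)) :
  unif_vanish W -> forall eta : R, 0 < eta -> exists delta : R,
  forall p, closure (W : set {family compact, 'rV[R]_d -> R}) p ->
  forall z, delta < `|z| -> `|p z| < eta.
Proof.
move=> uv eta eta0.
have eta20 : 0 < eta / 2 by rewrite divr_gt0.
have [delta Hd] := uv _ eta20.
exists delta => p clp z zd.
have [h [Wh [H1 _]]] := closure_approx clp z z _ eta20.
have := Hd h Wh z zd.
have : `|p z| <= `|p z - h z| + `|h z|.
  by have := ler_normD (p z - h z) (h z); rewrite subrK.
move=> ? ?; lra.
Qed.

Arguments closure_vanish {R d W}.

Lemma closure_C0 (R : realType) d (W : set ('rV[R]_d -> R)) :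
  equicontinuous_fam W -> unif_vanish W ->
  closure (W : set {family compact, 'rV[R]_d -> R}) `<=` @C0 R d.
Proof.
move=> eqc uv p clp; split; last first.
  move=> eta eta0; have [delta Hd] := closure_vanish uv _ eta0.
  by exists delta => z; apply: Hd.
move=> x; apply/(@cvgrPdist_lt _ _ _ (nbhs x) (nbhs_filter x)) => e e0.
have e30 : 0 < e / 3 by rewrite divr_gt0.
have [del del0 H] := eqc x _ e30.
apply/nbhs_ballP; exists del => //= y xy.
have [h [Wh [H1 H2]]] := closure_approx clp x y _ e30.
have := H h Wh y; rewrite -ball_normE in xy; move=> /(_ xy) H3.
have : `|p x - p y| <= `|p x - h x| + `|h x - h y| + `|p y - h y|.
  rewrite (_ : p x - p y = (p x - h x) + (h x - h y) - (p y - h y)); last by ring.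
  by rewrite (le_trans (ler_normB _ _)) // lerD2r ler_normD.
move=> ?; lra.
Qed.

Lemma cpt_closure (R : realType) d (W : set ('rV[R]_d -> R)) :
  equicontinuous_fam W -> unif_bounded W ->
  compact (closure (W : set {family compact, 'rV[R]_d -> R})).
Proof.
move=> eqc [M HM].
rewrite -precompactE; apply: (@pointwise_precompact_equicontinuous _ _ _ W).
- exact: norm_hausdorff.
- move=> x; rewrite precompactE.
  apply: (@subclosed_compact _ _ `[-M, M]%classic); [exact: closed_closure| exact: segment_compact|].
  have -> : (`[-M, M]%classic : set R) = closure `[-M, M]%classic.
    apply/closure_id; exact: interval_closed.
  apply: closureS => _ [g Wg <-] /=; rewrite in_itv /= -ler_norml; exact: HM.
- move=> x E; rewrite -entourage_from_ballE => -[e /= e0 sE].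
  have [del del0 H] := eqc x e e0.
  apply/nbhs_ballP; exists del => //= y xy g Wg; apply: sE => /=.
  rewrite -ball_normE /=; apply: H => //.
  by move: xy; rewrite -ball_normE.
Qed.

Lemma cpt_uniform (R : realType) d (W : set ('rV[R]_d -> R)) :
  unif_vanish W ->
  compact (closure (W : set {family compact, 'rV[R]_d -> R})) ->
  compact (closure (W : set {family compact, 'rV[R]_d -> R}) : set {uniform 'rV[R]_d -> R}).
Proof.
move=> uv cpt F PF FK.
have [p [Kp clF]] := cpt F PF FK.
exists p; split => // A B FA /uniform_nbhs [E [entE sB]].
move: entE; rewrite -entourage_from_ballE => -[e /= e0 sE].
have e20 : 0 < e / 2 by rewrite divr_gt0.
have [delta Hd] := closure_vanish uv _ e20.
pose C := closed_ball_ Num.Def.normr (0 : 'rV[R]_d) delta.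
have cC : compact C.
  apply: bounded_closed_compact; last exact: closed_closed_ball_.
  rewrite /bounded_near; apply: filterS (nbhs_pinfty_ge (num_real delta)) => M dM z zd.
  have e1 : `|(0:'rV[R]_d) - z| = `|z| by rewrite sub0r normrN.
  have zd2 : `|(0:'rV[R]_d) - z| <= delta by exact: zd.
  rewrite e1 in zd2; exact: le_trans zd2 dM.
have N := @fam_nbhs _ R compact C _ (p : {family compact, 'rV[R]_d -> R}) (entourage_ball R (PosNum e20)) cC.
have [h [[Ah Kh] Nh]] := clF _ _ (filterI FA FK) N.
exists h; split => //; apply: sB => y _; apply: sE; rewrite /= -ball_normE /=.
have [Cy|nCy] := pselect (C y).
  have := Nh y Cy; rewrite /= -ball_normE /= => ?; lra.
have yd : delta < `|y|.
  have e1 : `|(0:'rV[R]_d) - y| = `|y| by rewrite sub0r normrN.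
  have nCy2 : ~ (`|(0:'rV[R]_d) - y| <= delta) by exact: nCy.
  rewrite e1 in nCy2; move/negP: nCy2; rewrite -real_ltNge ?num_real //.
have h1 := Hd p Kp y yd; have h2 := Hd h Kh y yd.
have := ler_normB (p y) (h y); lra.
Qed.

Theorem proposition4p9 (dm : measure_display) (Omega : measurableType dm)
  (R : realType) (d : nat) (X : finType) (P : probability Omega R)
  (J : set R) (x : nat -> Omega -> X) (T : nat -> Omega -> R)
  (Q : X -> X -> R -> R) (Gam : X -> R -> R -> Op R d)
  (D : R -> X -> X -> Op R d) (EY : set (Fn R d)) :
  complete_prob P ->
  time_set J ->
  markov_renewal P x T Q ->
  (forall y, inhom_semigroup J (Gam y)) ->
  (forall eps y z, 0 < eps <= 1 -> bounded_op (D eps y z)) ->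
  EY `<=` @C0 R d ->
  (forall (Del : R) (s Tm : R) (f : Fn R d),
     0 < Del <= 1 -> J s -> J Tm -> s <= Tm -> EY f ->
     exists A : R -> set Omega,
       (forall eps, 0 < eps <= 1 ->
          measurable (A eps) /\ ((1 - Del)%:E <= P (A eps))%E) /\
       let Fam := [set g | exists t eps w, s <= t <= Tm /\ 0 < eps <= 1 /\
                     A eps w /\ g = Veps x T Gam D eps s t w f] in
       unif_vanish Fam /\ equicontinuous_fam Fam /\ unif_bounded Fam) ->
  forall (f : Fn R d) (s : R) (Del : R) (Tm : R),
    EY f -> J s -> 0 < Del <= 1 -> J Tm -> s <= Tm ->
    exists K : set {uniform 'rV[R]_d -> R},
      compact K /\ K `<=` @C0 R d /\
      (forall eta : R, 0 < eta -> exists2 eps0 : R, 0 < eps0 &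
         forall eps, 0 < eps < eps0 ->
           ((1 - Del - eta)%:E <=
              inner_prob P [set w | forall t : R, (s <= t <= Tm)%R ->
                               K (Veps x T Gam D eps s t w f)])%E).

Proof.
move=> Hc Ht Hm Hsg HD HEY Hyp f s Del Tm EYf Js Del01 JTm sTm.
have [A [HA HF]] := Hyp Del s Tm f Del01 Js JTm sTm EYf.
move: HF.
rewrite /=; set W := (X in unif_vanish X /\ _) => -[uv [eqc ub]].
exists (closure (W : set {family compact, 'rV[R]_d -> R})).
split; first exact: (@cpt_uniform _ _ _ uv (@cpt_closure _ _ _ eqc ub)).
split; first exact: (@closure_C0 _ _ _ eqc uv).
move=> eta eta0; exists 1 => // eps /andP[eps0 eps1].
have [mA PA] := HA eps ltac:(by rewrite eps0 ltW).
apply: (le_trans _ (ereal_sup_ubound _)); last first.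
  exists (A eps); split => //; split => // w Aw t st.
  apply: subset_closure; exists t, eps, w; split => //; split => //.
  by rewrite eps0 ltW.
apply: le_trans PA; rewrite lee_fin; lra.
Qed.
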